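(* Fix constants $\alpha,\beta$. For parameters $r,s$, let $a^{(r,s)}_n$ be the sequence with generating function $$G_{r,s}(x)=\cfrac{1}{1-(\alpha+s)x-\cfrac{\beta x^2}{1-(\alpha+r)x-\cfrac{\beta x^2}{1-(\alpha+r)x}}},$$ and let $b^{(r,s)}_n$ be its revert transform. Then the Hankel transform $\left(\det(b^{(r,s)}_{i+j})_{0\le i,j\le n}\right)_{n\ge0}$ is the same sequence for all values of $r$ and $s$.
   Context: For a power series $g(x)$ with $g(0)\ne0$, its revert transform is the sequence whose generating function is $\frac1x\,\mathrm{Rev}(xg(x))$, where $\mathrm{Rev}(f)$ denotes the compositional inverse of $f$ (the series $u$ with $f(u(x))=x$, $u(0)=0$). The Hankel transform of a sequence $(b_n)$ is the sequence $h_n=\det(b_{i+j})_{0\le i,j\le n}$, $n\ge0$. *)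

(* Defs.v *)
From mathcomp Require Import all_boot all_order all_algebra.
Set Implicit Arguments. Unset Strict Implicit. Unset Printing Implicit Defensive.
Import GRing.Theory.
Local Open Scope ring_scope.

Section Series.
Variable K : fieldType.
Notation series := (nat -> K).

Definition sone : series := fun n => (n == 0)%:R.
Definition sX : series := fun n => (n == 1)%:R.

Definition smul (a b : series) : series :=
  fun n => \sum_(i < n.+1) a i * b (n - i)%N.

Fixpoint spow (a : series) (k : nat) : series :=
  if k is k'.+1 then smul a (spow a k') else sone.

Definition sshift (k : nat) (a : series) : series :=
  fun n => if (k <= n)%N then a (n - k)%N else 0.

(* composition f(u(x)), meaningful when u 0 = 0 *)
Definition scomp (f u : series) : series :=
  fun n => \sum_(k < n.+1) f k * spow u k n.

(* multiplicative inverse of a series with a 0 != 0: the coefficients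
   0..n are computed by the usual recursion 
   c_0 = a_0^-1,  c_m = - a_0^-1 * sum_{i=1}^m a_i c_{m-i}. *)
Fixpoint sinv_prefix (a : series) (n : nat) : seq K :=
  if n is m.+1 then
    let p := sinv_prefix a m in
    rcons p (- (a 0%N)^-1 * \sum_(i < m.+1) a i.+1 * nth 0 p (m - i)%N)
  else [:: (a 0%N)^-1].

Definition sinv (a : series) : series := fun n => nth 0 (sinv_prefix a n) n.

Definition is_Rev (f u : series) : Prop := u 0%N = 0 /\ forall n, scomp f u n = sX n.

Definition hankel (b : series) (n : nat) : K :=
  \det (\matrix_(i < n.+1, j < n.+1) b (i + j)%N).

Definition Gcf (alpha beta r s : K) : series :=
  let T1 := sinv (fun n => sone n - (alpha + r) * sX n) in
  let T2 := sinv (fun n => sone n - (alpha + r) * sX n - beta * sshift 2 T1 n) in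
  sinv (fun n => sone n - (alpha + s) * sX n - beta * sshift 2 T2 n).

End Series.

(* Main.v *)
Require Import Defs.
From mathcomp Require Import all_boot all_order all_algebra.
From mathcomp Require Import ring zify.
Set Implicit Arguments. Unset Strict Implicit. Unset Printing Implicit Defensive.
Import GRing.Theory.
Local Open Scope ring_scope.


Section Hank.
Variable K : fieldType.

Lemma det_lowtri n (A : 'M[K]_n) : (forall i j : 'I_n, (i < j)%N -> A i j = 0) ->
  (forall i, A i i = 1) -> \det A = 1.
Proof.
move=> Hl Hd; rewrite det_trig; last by apply/is_trig_mxP.
by rewrite big1 // => i _; rewrite Hd.
Qed.

Lemma hankel_shift (F a : nat -> K) n : F 0%N = 1 ->
  (forall m, \sum_(l < m.+1) F l * a (m - l)%N = (m == 0%N)%:R) ->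
  hankel F n.+1 = (-1) ^+ n.+1 * hankel (fun k => a k.+2) n.
Proof.
move=> F0 Hc.
have a0 : a 0%N = 1 by move: (Hc 0%N); rewrite big_ord1 F0 mul1r.
pose H := \matrix_(i < n.+2, j < n.+2) F (i + j)%N.
pose U := \matrix_(i < n.+2, j < n.+2) (if (i <= j)%N then a (j - i)%N else 0).
have dU : \det U = 1.
  rewrite -det_tr; apply: det_lowtri => [i j ij|i]; rewrite !mxE.
    by rewrite leqNgt ij.
  by rewrite leqnn subnn a0.
have HU : forall i k : 'I_n.+2, (H *m U) i k =
    (i + k == 0)%N%:R - \sum_(l < i) F l * a (i + k - l)%N.
  move=> i k; rewrite !mxE.
  have -> : \sum_(j < n.+2) H i j * U j k = \sum_(j < k.+1) F (i + j)%N * a (k - j)%N.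
    rewrite (big_ord_widen _ (fun j => F (i + j)%N * a (k - j)%N) (ltn_ord k)).
    rewrite [RHS]big_mkcond /=; apply: eq_bigr => j _; rewrite !mxE ltnS.
    by case: ifP => _; rewrite ?mulr0.
  rewrite -(Hc (i + k)%N) -addnS big_split_ord /= [X in X - _]addrC addrK.
  by apply: eq_bigr => j _; rewrite /= subnDl.
have -> : hankel F n.+1 = \det (H *m U) by rewrite det_mulmx dU mulr1.
rewrite (expand_det_row _ ord0) big_ord_recl big1 ?addr0; last first.
  by move=> j _; rewrite HU /= big_ord0 subr0 mul0r.
rewrite HU /= big_ord0 subr0 mul1r /cofactor /= expr0 mul1r.
pose T := \matrix_(i < n.+1, p < n.+1) (if (p <= i)%N then F (i - p)%N else 0).
pose A2 := \matrix_(i < n.+1, j < n.+1) a (i + j).+2.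
have -> : row' ord0 (col' ord0 (H *m U)) = - (T *m A2).
  apply/matrixP => i k.
  transitivity ((H *m U) (lift ord0 i) (lift ord0 k)); first by rewrite !mxE.
  rewrite HU [RHS]mxE; rewrite /= /bump /= !add1n sub0r; congr (- _); rewrite [RHS]mxE.
  have -> : \sum_j T i j * A2 j k = \sum_(p < i.+1) F (i - p)%N * a (p + k).+2.
    rewrite (big_ord_widen _ (fun p => F (i - p)%N * a (p + k).+2) (ltn_ord i)).
    rewrite [RHS]big_mkcond /=; apply: eq_bigr => j _; rewrite !mxE ltnS.
    by case: ifP => _; rewrite ?mul0r.
  rewrite (reindex_inj (@rev_ord_inj _)) /=; apply: eq_bigr => j _.
  have hj := ltn_ord j; congr (F _ * a _); lia.
rewrite -scaleN1r detZ det_mulmx.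
have -> : \det T = 1.
  apply: det_lowtri => [i j ij|i]; rewrite !mxE; first by rewrite leqNgt ij.
  by rewrite leqnn subnn F0.
by rewrite mul1r.
Qed.
End Hank.


Section Binom.
Variable K : fieldType.

Lemma coef_XaddC_exp (t : K) i k :
  (('X + t%:P) ^+ i)`_k = 'C(i, k)%:R * t ^+ (i - k).
Proof.
elim: i k => [|i IH] k.
  rewrite expr0 coefC; case: k => [|k]; first by rewrite bin0 expr0 mulr1.
  by rewrite bin0n mul0r.
rewrite exprSr mulrDr coefD coefMX coefMC !IH.
case: k => [|k] /=; first by rewrite !bin0 !subn0 !mul1r add0r exprSr.
rewrite binS natrD mulrDl addrC; congr (_ + _).
case: (ltnP k i) => ki.
  by rewrite -mulrA -exprSr subnSK.
by rewrite bin_small ?ltnS // !mul0r.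
Qed.

Definition bint (t : K) (g : nat -> K) (m : nat) : K :=
  \sum_(k < m.+1) 'C(m, k)%:R * t ^+ (m - k) * g k.

Lemma hankel_binom (g : nat -> K) t n : hankel (bint t g) n = hankel g n.
Proof.
pose P := \matrix_(i < n.+1, k < n.+1) ('C(i, k)%:R * t ^+ (i - k)).
pose Hg := \matrix_(i < n.+1, j < n.+1) g (i + j)%N.
pose B := (n.+1 + n.+1)%N.
pose L (p : {poly K}) := \sum_(m < B) p`_m * g m.
have LX : forall c : 'I_n.+1 -> 'I_n.+1 -> K,
    L (\sum_(k < n.+1) \sum_(l < n.+1) c k l *: 'X^(k + l)) =
    \sum_(k < n.+1) \sum_(l < n.+1) c k l * g (k + l)%N.
  move=> c; rewrite /L.
  under eq_bigr => m _ do rewrite coef_sum big_distrl /=.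
  rewrite exchange_big /=; apply: eq_bigr => k _.
  under eq_bigr => m _ do rewrite coef_sum big_distrl /=.
  rewrite exchange_big /=; apply: eq_bigr => l _.
  have hkl : (k + l < B)%N by have := ltn_ord k; have := ltn_ord l; rewrite /B; lia.
  rewrite (bigD1 (Ordinal hkl)) //= big1 ?addr0 => [|m /eqP hm].
    by rewrite coefZ coefXn eqxx mulr1.
  rewrite coefZ coefXn; case: eqP => [e|]; last by rewrite mulr0 mul0r.
  by exfalso; apply: hm; apply: val_inj.
have pw : forall i : 'I_n.+1, ('X + t%:P) ^+ i = \sum_(k < n.+1) P i k *: 'X^k.
  move=> i; apply/polyP => m; rewrite coef_XaddC_exp coef_sum.
  case: (ltnP m n.+1) => hm.
    rewrite (bigD1 (Ordinal hm)) //= big1 ?addr0 => [|q /eqP hq].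
      by rewrite coefZ coefXn eqxx mulr1 mxE.
    rewrite coefZ coefXn; case: eqP => [e|]; last by rewrite mulr0.
    by exfalso; apply: hq; apply: val_inj.
  rewrite bin_small; last by apply: (leq_trans (ltn_ord i)).
  rewrite mul0r big1 // => q _; rewrite coefZ coefXn; case: eqP => [e|]; last by rewrite mulr0.
  by move: (ltn_ord q); rewrite -e ltnNge hm.
have Lb : forall m, (m < B)%N -> L (('X + t%:P) ^+ m) = bint t g m.
  move=> m hm; rewrite /L /bint (big_ord_widen _ (fun q => 'C(m, q)%:R * t ^+ (m - q) * g q) hm).
  rewrite [RHS]big_mkcond; apply: eq_bigr => q _; rewrite coef_XaddC_exp ltnS.
  by case: leqP => // hq; rewrite bin_small // !mul0r.
have -> : hankel (bint t g) n = \det (P *m Hg *m P^T).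
  rewrite /hankel; congr (\det _); apply/matrixP => i j; rewrite !mxE.
  have hij : (i + j < B)%N by have := ltn_ord i; have := ltn_ord j; rewrite /B; lia.
  rewrite -(Lb _ hij) exprD !pw mulr_suml.
  under eq_bigr => k _ do rewrite mulr_sumr.
  under eq_bigr => k _ do under eq_bigr => l _ do rewrite -scalerAl -scalerAr scalerA -exprD.
  rewrite LX exchange_big /=; apply: eq_bigr => l _; rewrite !mxE big_distrl /=.
  by apply: eq_bigr => k _; rewrite !mxE; ring.
rewrite !det_mulmx det_tr.
have -> : \det P = 1.
  apply: det_lowtri => [i j ij|i]; rewrite !mxE; first by rewrite bin_small // mul0r.
  by rewrite binn subnn expr0 mulr1.
by rewrite mul1r mulr1.
Qed.
End Binom.


Section Ser.
Variable K : fieldType.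
Notation series := (nat -> K).

Definition tr (N : nat) (f : series) : {poly K} := \poly_(i < N) f i.
Definition Z (N : nat) (p : {poly K}) := ('X^N %| p).

Lemma ZP N p : Z N p <-> (forall i, (i < N)%N -> p`_i = 0).
Proof.
split.
  by case/dvdpP => q -> i hi; rewrite coefMXn hi.
move=> H; rewrite /Z; rewrite -(poly_take_drop N p).
have -> : take_poly N p = 0.
  by apply/polyP => i; rewrite coef_take_poly coef0; case: ifP => // /H.
by rewrite add0r dvdp_mull.
Qed.

Lemma Zle M N p : (M <= N)%N -> Z N p -> Z M p.
Proof. by move=> h; apply: dvdp_trans; apply: dvdp_exp2l. Qed.
Lemma ZD N p q : Z N p -> Z N q -> Z N (p + q).
Proof. exact: dvdp_add. Qed.
Lemma ZB N p q : Z N p -> Z N q -> Z N (p - q).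
Proof. exact: dvdp_sub. Qed.
Lemma ZM N p q : Z N p -> Z N (q * p).
Proof. exact: dvdp_mull. Qed.
Lemma Z0 N : Z N 0.
Proof. exact: dvdp0. Qed.
Lemma ZX N p : Z N.+1 ('X * p) -> Z N p.
Proof. by rewrite /Z exprS dvdp_mul2l // polyX_eq0. Qed.
Lemma ZX2 N p : Z N.+2 ('X^2 * p) -> Z N p.
Proof. by rewrite exprS expr1 -mulrA => /ZX /ZX. Qed.

Lemma comp_Xn N (q : {poly K}) : 'X^N \Po q = q ^+ N.
Proof. by elim: N => [|N IH]; rewrite ?expr0 ?comp_polyC // !exprS comp_polyM comp_polyX IH. Qed.

Lemma Zcomp N p q : 'X %| q -> Z N p -> Z N (p \Po q).
Proof.
move=> hq hp; apply: (@dvdp_trans _ (q ^+ N)); first exact: dvdp_exp2r.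
by rewrite -comp_Xn; apply: dvdp_comp_poly.
Qed.

Definition eqm N p q := Z N (p - q).

Lemma tr_coef N f i : (tr N f)`_i = if (i < N)%N then f i else 0.
Proof. by rewrite coef_poly. Qed.

Lemma tr_mul N f g : eqm N (tr N (smul f g)) (tr N f * tr N g).
Proof.
apply/ZP => i hi; rewrite coefB coefM tr_coef hi /smul; apply/eqP; rewrite subr_eq0; apply/eqP.
apply: eq_bigr => j _; rewrite !tr_coef (leq_ltn_trans (leq_ord j) hi).
by rewrite (leq_ltn_trans (leq_subr _ _) hi).
Qed.

Lemma tr_shift N k f : eqm N (tr N (sshift k f)) ('X^k * tr N f).
Proof.
apply/ZP => i hi; rewrite coefB coefXnM !tr_coef hi /sshift.
case: ltnP => h; first by rewrite subrr.
by rewrite (leq_ltn_trans (leq_subr _ _) hi) subrr.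
Qed.

Lemma tr_one N : eqm N (tr N (@sone K)) 1.
Proof. by apply/ZP => i hi; rewrite coefB tr_coef hi coef1 /sone subrr. Qed.
Lemma tr_X N : eqm N (tr N (@sX K)) 'X.
Proof. by apply/ZP => i hi; rewrite coefB tr_coef hi coefX /sX subrr. Qed.

Lemma trD N f g : tr N (fun n => f n + g n) = tr N f + tr N g.
Proof. by apply/polyP => i; rewrite coefD !tr_coef; case: ifP; rewrite ?addr0. Qed.
Lemma trB N f g : tr N (fun n => f n - g n) = tr N f - tr N g.
Proof. by apply/polyP => i; rewrite coefB !tr_coef; case: ifP; rewrite ?subr0. Qed.
Lemma trZ N c f : tr N (fun n => c * f n) = c%:P * tr N f.
Proof. by apply/polyP => i; rewrite coefCM !tr_coef; case: ifP; rewrite ?mulr0. Qed.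

Lemma eqm_refl N p : eqm N p p.
Proof. by rewrite /eqm subrr; apply: Z0. Qed.
Lemma eqm_sym N p q : eqm N p q -> eqm N q p.
Proof. rewrite /eqm => h; have -> : q - p = (-1) * (p - q) by ring.
exact: ZM. Qed.
Lemma eqm_trans N p q r : eqm N p q -> eqm N q r -> eqm N p r.
Proof. by move=> h1 h2; have := ZD h1 h2; rewrite /eqm addrA subrK. Qed.
Lemma eqmM N p q p' q' : eqm N p q -> eqm N p' q' -> eqm N (p * p') (q * q').
Proof.
rewrite /eqm => h1 h2; have -> : p * p' - q * q' = p' * (p - q) + q * (p' - q') by ring.
by apply: ZD; apply: ZM.
Qed.
Lemma eqmD N p q p' q' : eqm N p q -> eqm N p' q' -> eqm N (p + p') (q + q').
Proof.
rewrite /eqm => h1 h2; have -> : (p + p') - (q + q') = (p - q) + (p' - q') by ring.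
exact: ZD.
Qed.

Lemma tr_pow N u k : eqm N (tr N (spow u k)) (tr N u ^+ k).
Proof.
elim: k => [|k IH] /=; first exact: tr_one.
by rewrite exprS; apply: eqm_trans (tr_mul _ _ _) _; apply: eqmM => //; apply: eqm_refl.
Qed.

Lemma eqm_coef N p q i : eqm N p q -> (i < N)%N -> p`_i = q`_i.
Proof. by move=> /ZP h hi; apply/eqP; rewrite -subr_eq0 -coefB h. Qed.

Lemma tr_comp N f u : u 0%N = 0 -> eqm N (tr N (scomp f u)) (tr N f \Po tr N u).
Proof.
move=> u0.
have Xu : 'X %| tr N u.
  have : Z 1 (tr N u) by apply/ZP => i; rewrite ltnS leqn0 => /eqP ->; rewrite tr_coef; case: ifP.
  by rewrite /Z expr1.
apply/ZP => i hi; rewrite coefB tr_coef hi /scomp.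
rewrite {2}/tr poly_def rmorph_sum /= coef_sum; apply/eqP; rewrite subr_eq0; apply/eqP.
have vanish : forall k, (i < k)%N -> ((tr N u) ^+ k)`_i = 0.
  move=> k ik; have : Z k (tr N u ^+ k) by exact: dvdp_exp2r.
  by move/ZP; apply.
rewrite (big_ord_widen _ (fun k => f k * spow u k i) hi) big_mkcond /=.
apply: eq_bigr => k _; rewrite comp_polyZ comp_Xn coefZ ltnS.
case: leqP => hk; last by rewrite vanish // mulr0.
congr (_ * _); rewrite -(eqm_coef (tr_pow N u k) hi) tr_coef hi //.
Qed.


Lemma sinv_size (a : series) n : size (sinv_prefix a n) = n.+1.
Proof. by elim: n => [|n IH] //=; rewrite size_rcons IH. Qed.

Lemma sinv_nth (a : series) n m : (m <= n)%N -> nth 0 (sinv_prefix a n) m = sinv a m.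
Proof.
elim: n => [|n IH]; first by rewrite leqn0 => /eqP ->.
rewrite leq_eqVlt => /orP [/eqP -> //|]; rewrite ltnS => hm.
by rewrite /= nth_rcons sinv_size ltnS hm IH.
Qed.

Lemma sinvS (a : series) m :
  sinv a m.+1 = - (a 0%N)^-1 * \sum_(i < m.+1) a i.+1 * sinv a (m - i)%N.
Proof.
rewrite {1}/sinv /= nth_rcons sinv_size ltnn eqxx; congr (_ * _).
by apply: eq_bigr => i _; rewrite sinv_nth // leq_subr.
Qed.

Lemma sinv_mul (a : series) : a 0%N != 0 -> forall n, smul a (sinv a) n = sone K n.
Proof.
move=> a0 [|m]; rewrite /smul.
  by rewrite big_ord1 /sinv /= mulfV.
rewrite big_ord_recl /= subn0 sinvS mulrA mulrN mulfV // mulN1r.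
by rewrite /sone /=; apply/eqP; rewrite addrC subr_eq0.
Qed.


Lemma tr_ext N f g : (forall n, f n = g n) -> tr N f = tr N g.
Proof. by move=> h; apply/polyP => i; rewrite !tr_coef h. Qed.

Lemma tr_le M N f : (N <= M)%N -> eqm N (tr M f) (tr N f).
Proof.
move=> h; apply/ZP => i hi; rewrite coefB !tr_coef hi (leq_trans hi h) subrr //.
Qed.

Lemma eqmB N p q p' q' : eqm N p q -> eqm N p' q' -> eqm N (p - p') (q - q').
Proof.
rewrite /eqm => h1 h2; have -> : (p - p') - (q - q') = (p - q) - (p' - q') by ring.
exact: ZB.
Qed.

Lemma eqm_comp N p q U : 'X %| U -> eqm N p q -> eqm N (p \Po U) (q \Po U).
Proof. by move=> hU h; rewrite /eqm -comp_polyB; apply: Zcomp. Qed.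

Lemma eqm_le M N p q : (N <= M)%N -> eqm M p q -> eqm N p q.
Proof. exact: Zle. Qed.

Lemma comp1 (q : {poly K}) : 1 \Po q = 1.
Proof. by rewrite -polyC1 comp_polyC. Qed.

Lemma tr_inv N f : f 0%N != 0 -> eqm N (tr N f * tr N (sinv f)) 1.
Proof.
move=> h; apply: eqm_trans (eqm_sym (tr_mul _ _ _)) _.
by rewrite (tr_ext _ (sinv_mul h)); apply: tr_one.
Qed.

End Ser.


Section Key.
Variable K : fieldType.

Definition EqS (t beta : K) (S : {poly K}) : {poly K} :=
  let w := 1 - t%:P * 'X + 'X^2 * S in S * (w ^+ 2 - beta%:P * 'X^2) - beta%:P * w.

Lemma inv_comp M (Df : nat -> K) Q U : eqm M (tr M Df) Q -> Df 0%N != 0 -> 'X %| U ->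
  eqm M ((tr M (sinv Df) \Po U) * (Q \Po U)) 1.
Proof.
move=> hQ h0 hU; have i2 := eqm_comp hU (tr_inv M h0).
rewrite comp_polyM comp1 in i2; apply: eqm_trans _ i2; rewrite mulrC.
by apply: eqmM; [apply: eqm_comp => //; apply: eqm_sym | apply: eqm_refl].
Qed.

Lemma key (alpha beta r s : K) (u : nat -> K) :
  is_Rev (sshift 1 (Gcf alpha beta r s)) u ->
  u 1%N = 1 /\ forall N, Z N (EqS (r - s) beta (tr N.+3 (fun k => sinv (fun j => u j.+1) k.+2))).
Proof.
case=> u0 hu.
pose c := alpha + r; pose d := alpha + s.
pose D1 : nat -> K := fun n => sone K n - c * sX K n.
pose T1 := sinv D1.
pose D2 : nat -> K := fun n => sone K n - c * sX K n - beta * sshift 2 T1 n.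
pose T2 := sinv D2.
pose D3 : nat -> K := fun n => sone K n - d * sX K n - beta * sshift 2 T2 n.
pose G := sinv D3.
have GE : Gcf alpha beta r s = G by [].
rewrite GE in hu.
pose b := fun j => u j.+1.
pose a := sinv b.
have D10 : D1 0%N = 1 by rewrite /D1 /sone /sX /= mulr0 subr0.
have D20 : D2 0%N = 1 by rewrite /D2 /sone /sX /sshift /= !mulr0 !subr0.
have D30 : D3 0%N = 1 by rewrite /D3 /sone /sX /sshift /= !mulr0 !subr0.
have G0 : G 0%N = 1 by rewrite /G /sinv /= D30 invr1.
have facts : forall M, [/\ 'X %| tr M u,
   eqm M (tr M u * (tr M G \Po tr M u)) 'X,
   eqm M ((tr M G \Po tr M u) * (1 - d%:P * tr M u - beta%:P * (tr M u ^+ 2 * (tr M T2 \Po tr M u)))) 1,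
   eqm M ((tr M T2 \Po tr M u) * (1 - c%:P * tr M u - beta%:P * (tr M u ^+ 2 * (tr M T1 \Po tr M u)))) 1
 & eqm M ((tr M T1 \Po tr M u) * (1 - c%:P * tr M u)) 1].
  move=> M; set U := tr M u.
  have Xu : 'X %| U.
    have : Z 1 U by apply/ZP => i; rewrite ltnS leqn0 => /eqP ->; rewrite tr_coef; case: ifP.
    by rewrite /Z expr1.
  split => //.
  - have e1 := eqm_comp Xu (tr_shift M 1 G).
    rewrite comp_polyM comp_Xn expr1 in e1.
    apply: eqm_trans (eqm_sym e1) _.
    apply: eqm_trans (eqm_sym (tr_comp _ _ u0)) _.
    by rewrite (tr_ext _ hu); apply: tr_X.
  - have tD : eqm M (tr M D3) (1 - d%:P * 'X - beta%:P * ('X^2 * tr M T2)).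
      have -> : tr M D3 = tr M (sone K) - d%:P * tr M (sX K) - beta%:P * tr M (sshift 2 T2).
        apply/polyP => i; rewrite !(coefB, coefCM, tr_coef).
        by case: ifP => _; rewrite ?mulr0 ?subr0.
      apply: eqmB; first apply: eqmB; first exact: tr_one.
        by apply: eqmM; [apply: eqm_refl | apply: tr_X].
      by apply: eqmM; [apply: eqm_refl | apply: tr_shift].
    have := inv_comp tD (_ : D3 0%N != 0) Xu.
    rewrite !(comp_polyB, comp_polyM, comp_polyC, comp_polyX, comp_Xn, comp1).
    by apply; rewrite D30 oner_neq0.
  - have tD : eqm M (tr M D2) (1 - c%:P * 'X - beta%:P * ('X^2 * tr M T1)).
      have -> : tr M D2 = tr M (sone K) - c%:P * tr M (sX K) - beta%:P * tr M (sshift 2 T1).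
        apply/polyP => i; rewrite !(coefB, coefCM, tr_coef).
        by case: ifP => _; rewrite ?mulr0 ?subr0.
      apply: eqmB; first apply: eqmB; first exact: tr_one.
        by apply: eqmM; [apply: eqm_refl | apply: tr_X].
      by apply: eqmM; [apply: eqm_refl | apply: tr_shift].
    have := inv_comp tD (_ : D2 0%N != 0) Xu.
    rewrite !(comp_polyB, comp_polyM, comp_polyC, comp_polyX, comp_Xn, comp1).
    by apply; rewrite D20 oner_neq0.
  - have tD : eqm M (tr M D1) (1 - c%:P * 'X).
      have -> : tr M D1 = tr M (sone K) - c%:P * tr M (sX K).
        apply/polyP => i; rewrite !(coefB, coefCM, tr_coef).
        by case: ifP => _; rewrite ?mulr0 ?subr0.
      apply: eqmB; first exact: tr_one.
      by apply: eqmM; [apply: eqm_refl | apply: tr_X].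
    have := inv_comp tD (_ : D1 0%N != 0) Xu.
    rewrite !(comp_polyB, comp_polyM, comp_polyC, comp_polyX, comp_Xn, comp1).
    by apply; rewrite D10 oner_neq0.
have gcoef0 : forall M, (tr M G \Po tr M u)`_0 = (if (0 < M)%N then 1 else 0).
  move=> M; rewrite -horner_coef0 horner_comp horner_coef0 tr_coef.
  case: M => [|M] /=; first by rewrite horner_coef0 tr_coef.
  by rewrite u0 horner_coef0 tr_coef /= G0.
have b0 : b 0%N = 1.
  have [Xu hG _ _ _] := facts 2%N.
  have := eqm_coef hG (isT : (1 < 2)%N); rewrite coefX coefM big_ord_recl big_ord1 /=.
  by rewrite gcoef0 /= !tr_coef /= u0 mul0r add0r mulr1.
split => // N.
pose M := N.+3.
have [Xu hG h2 h3 h4] := facts M.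
set U := tr M u in Xu hG h2 h3 h4.
set g := tr M G \Po U in hG h2.
set t2 := tr M T2 \Po U in h2 h3.
set t1 := tr M T1 \Po U in h3 h4.
pose B := tr M b.
have hUB : eqm M U ('X * B).
  apply/ZP => -[|i] hi; rewrite coefB coefXM /U /B !tr_coef hi /=; first by rewrite u0 subrr.
  by rewrite (ltn_trans (ltnSn i) hi) subrr.
have a0 : a 0%N = 1 by rewrite /a /sinv /= b0 invr1.
pose S := fun k => a k.+2.
pose A := 1 + (a 1%N)%:P * 'X + 'X^2 * tr M S.
have hA : eqm M (tr M a) A.
  apply/ZP => -[|[|i]] hi; rewrite /A coefB !coefD coefXnM coefCM coefX coef1 !tr_coef hi /=.
    by rewrite a0 !mulr0 !addr0 subrr.
    by rewrite mulr1 add0r addr0 subrr.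
  by rewrite mulr0 add0r subn2 /= (ltn_trans (ltnSn _) (ltn_trans (ltnSn _) hi)) add0r subrr.
have h5 : eqm M (B * A) 1.
  apply: eqm_trans (tr_inv M (_ : b 0%N != 0)); last by rewrite b0 oner_neq0.
  by apply: eqmM; [apply: eqm_refl | apply: eqm_sym hA].
pose L := N.+2.
have h1 : Z L (B * g - 1).
  apply: ZX; have -> : 'X * (B * g - 1) = g * ('X * B - U) + (U * g - 'X) by ring.
  by apply: ZD; [apply: ZM; apply: eqm_sym hUB | apply: hG].
have LM : (L <= M)%N by [].
move: (Zle LM h2) (Zle LM h3) (Zle LM h4) (Zle LM h5) (Zle LM hUB) => {}h2 {}h3 {}h4 {}h5 hUB'.
have F1 : Z L (A - g).
  have -> : A - g = (-A) * (B * g - 1) + g * (B * A - 1) by ring.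
  by apply: ZD; apply: ZM.
have F2 : Z L (A * (1 - d%:P * U - beta%:P * (U ^+ 2 * t2)) - 1).
  have -> : A * (1 - d%:P * U - beta%:P * (U ^+ 2 * t2)) - 1 =
    (1 - d%:P * U - beta%:P * (U ^+ 2 * t2)) * (A - g) +
    (g * (1 - d%:P * U - beta%:P * (U ^+ 2 * t2)) - 1) by ring.
  by apply: ZD; [apply: ZM | ].
have F3 : Z L (A * U - 'X).
  have -> : A * U - 'X = A * (U - 'X * B) + 'X * (B * A - 1) by ring.
  by apply: ZD; apply: ZM.
have F4 : Z L (A - d%:P * 'X - beta%:P * 'X * U * t2 - 1).
  have -> : A - d%:P * 'X - beta%:P * 'X * U * t2 - 1 =
    (A * (1 - d%:P * U - beta%:P * (U ^+ 2 * t2)) - 1) +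
    (d%:P + beta%:P * U * t2) * (A * U - 'X) by ring.
  by apply: ZD; [ | apply: ZM].
pose P1 := 1 - c%:P * U.
have F5 : Z L (t2 * ((A - c%:P * 'X) ^+ 2 - beta%:P * 'X ^+ 2) - A * (A - c%:P * 'X)).
  have -> : t2 * ((A - c%:P * 'X) ^+ 2 - beta%:P * 'X ^+ 2) - A * (A - c%:P * 'X) =
    (t2 * (c%:P * (A - c%:P * 'X + A * P1) + beta%:P * (A * U + 'X))) * (A * U - 'X)
    + (t2 * beta%:P * A ^+ 2 * U ^+ 2) * (t1 * (1 - c%:P * U) - 1)
    + (A ^+ 2 * P1) * (t2 * (1 - c%:P * U - beta%:P * (U ^+ 2 * t1)) - 1)
    + (- c%:P * A) * (A * U - 'X) by rewrite /P1; ring.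
  by apply: ZD; [apply: ZD; [apply: ZD|]|]; apply: ZM.
have F6 : Z L ((A - d%:P * 'X - 1) * ((A - c%:P * 'X) ^+ 2 - beta%:P * 'X ^+ 2)
               - beta%:P * 'X ^+ 2 * (A - c%:P * 'X)).
  have -> : (A - d%:P * 'X - 1) * ((A - c%:P * 'X) ^+ 2 - beta%:P * 'X ^+ 2)
               - beta%:P * 'X ^+ 2 * (A - c%:P * 'X) =
    ((A - c%:P * 'X) ^+ 2 - beta%:P * 'X ^+ 2) * (A - d%:P * 'X - beta%:P * 'X * U * t2 - 1)
    + (beta%:P * 'X * U) * (t2 * ((A - c%:P * 'X) ^+ 2 - beta%:P * 'X ^+ 2) - A * (A - c%:P * 'X))
    + (beta%:P * 'X * (A - c%:P * 'X)) * (A * U - 'X) by ring.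
  by apply: ZD; [apply: ZD|]; apply: ZM.
pose Sp := tr M S.
pose a1 := a 1%N.
pose y := a1%:P - c%:P + 'X * Sp.
pose q1 := y + y + 'X * y ^+ 2 - beta%:P * 'X.
pose R := (a1%:P - d%:P) * q1 + Sp * (1 + 'X * q1) - beta%:P * (1 + 'X * y).
have E1 : (A - d%:P * 'X - 1) * ((A - c%:P * 'X) ^+ 2 - beta%:P * 'X ^+ 2)
               - beta%:P * 'X ^+ 2 * (A - c%:P * 'X) = 'X * (a1%:P - d%:P) + 'X ^+ 2 * R.
  by rewrite /R /q1 /y /A /Sp /a1; ring.
rewrite E1 in F6.
have ha1 : a1 = d.
  have := (proj1 (ZP _ _) F6) 1%N isT.
  rewrite coefD coefXM coefXnM /= coefB !coefC /= addr0 => /eqP.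
  by rewrite subr_eq0 => /eqP.
have hrs : (r - s)%:P = c%:P - d%:P by rewrite -polyCB /c /d; congr (_%:P); ring.
apply: ZX2; rewrite /EqS /= hrs.
suff -> : 'X ^+ 2 * ((Sp * ((1 - (c%:P - d%:P) * 'X + 'X ^+ 2 * Sp) ^+ 2 - beta%:P * 'X ^+ 2)
        - beta%:P * (1 - (c%:P - d%:P) * 'X + 'X ^+ 2 * Sp))) = 'X * (a1%:P - d%:P) + 'X ^+ 2 * R by [].
by rewrite /R /q1 /y ha1; ring.
Qed.
End Key.


Section T.
Variable K : fieldType.

Definition Kf (t beta : K) (p q : {poly K}) : {poly K} :=
  let wp := 1 - t%:P * 'X + 'X^2 * p in
  let wq := 1 - t%:P * 'X + 'X^2 * q in
  wp ^+ 2 - beta%:P * 'X^2 + q * 'X^2 * (wp + wq) - beta%:P * 'X^2.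

Lemma EqS_diff (t beta : K) (p q : {poly K}) : EqS t beta p - EqS t beta q = (p - q) * Kf t beta p q.
Proof. by rewrite /EqS /Kf /=; ring. Qed.

Lemma EqS_eqm N (t beta : K) (p q : {poly K}) : eqm N p q -> eqm N (EqS t beta p) (EqS t beta q).
Proof. by rewrite /eqm EqS_diff mulrC; apply: ZM. Qed.

Lemma Kf0 N (t beta : K) (p q : {poly K}) : coprimep ('X ^+ N) (Kf t beta p q).
Proof.
apply: coprimep_expl; rewrite coprimep_sym -['X]subr0 -polyC0 coprimep_XsubC.
by rewrite /root /Kf /= !hornerE /= expr0n /= !(mulr0, mul0r, subr0, addr0) expr1n oner_neq0.
Qed.

Lemma EqS_uniq t beta (S1 S2 : nat -> K) :
  (forall N, Z N (EqS t beta (tr N S1))) -> (forall N, Z N (EqS t beta (tr N S2))) ->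
  forall n, S1 n = S2 n.
Proof.
move=> h1 h2 n; pose N := n.+1.
have := ZB (h1 N) (h2 N); rewrite EqS_diff /Z Gauss_dvdpl ?Kf0 // => /ZP /(_ n (ltnSn n)).
by rewrite coefB !tr_coef ltnSn => /eqP; rewrite subr_eq0 => /eqP.
Qed.


Lemma hockey i j : (\sum_(l < i.+1) 'C(i - l + j, j) = 'C(i + j.+1, j.+1))%N.
Proof.
elim: i => [|i IH]; first by rewrite big_ord1 /= !binn.
rewrite big_ord_recl /= subn0.
have -> : (\sum_(l < i.+1) 'C(i.+1 - bump 0 l + j, j) = \sum_(l < i.+1) 'C(i - l + j, j))%N.
  by apply: eq_bigr => l _; rewrite /bump /= add1n subSS.
rewrite IH.
have -> : (i.+1 + j.+1 = (i + j.+1).+1)%N by lia.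
by rewrite binS addnC addSn -addnS.
Qed.

Lemma comp_exp (p q : {poly K}) k : (p ^+ k) \Po q = (p \Po q) ^+ k.
Proof. by elim: k => [|k IH]; rewrite ?expr0 ?comp1 // !exprS comp_polyM IH. Qed.

Lemma EqS_bint (t tau beta : K) (S : nat -> K) :
  (forall N, Z N (EqS t beta (tr N S))) -> forall N, Z N (EqS (t + tau) beta (tr N (bint tau S))).
Proof.
move=> h N.
pose P : {poly K} := \poly_(j < N) tau ^+ j.
have hP : Z N (P * (1 - tau%:P * 'X) - 1).
  have -> : P * (1 - tau%:P * 'X) - 1 = P - tau%:P * ('X * P) - 1 by ring.
  apply/ZP => -[|i] hi; rewrite !coefB coefCM coefXM coef1 !coef_poly hi /=.
    by rewrite expr0 mulr0 !subr0 subrr.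
  by rewrite (ltn_trans (ltnSn i) hi) exprS !subr0 subrr.
pose m := 'X * P.
have Xm : 'X %| m by apply: dvdp_mulIl.
pose Sp := tr N S.
pose Sm := Sp \Po m.
have Em := Zcomp Xm (h N).
rewrite /EqS /= !(comp_polyB, comp_polyD, comp_polyM, comp_polyC, comp_polyX, comp_Xn, comp1, comp_exp) in Em.
pose SB := P * Sm.
pose wm := 1 - t%:P * m + m ^+ 2 * Sm.
pose EmE := Sm * (wm ^+ 2 - beta%:P * m ^+ 2) - beta%:P * wm.
have Em' : Z N EmE by exact: Em.
pose hh := P * (1 - tau%:P * 'X) - 1.
have ZSB : Z N (EqS (t + tau) beta SB).
  have -> : EqS (t + tau) beta SB =
     (- ((hh ^+ 2 + 3%:R * hh + 3%:R) * EqS (t + tau) beta SB)) * hh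
     + ((1 - tau%:P * 'X) ^+ 3 * P ^+ 2) * EmE
     + ((1 - tau%:P * 'X) ^+ 3 * P ^+ 2 * (Sm * (wm + wm + hh) - beta%:P)) * hh.
    rewrite /EqS /= /EmE /wm /hh /SB /m polyCD; ring.
  by apply: ZD; [apply: ZD|]; apply: ZM.
have powP : forall j i, (i < N)%N -> (P ^+ j.+1)`_i = 'C(i + j, j)%:R * tau ^+ i.
  elim=> [|j IH] i hi; first by rewrite expr1 coef_poly hi bin0 mul1r.
  rewrite exprS coefM.
  rewrite -hockey natr_sum mulr_suml; apply: eq_bigr => l _.
  have hl : (l < N)%N by apply: leq_ltn_trans hi; rewrite -ltnS.
  rewrite IH ?(leq_ltn_trans (leq_subr _ _) hi) // coef_poly hl.
  by rewrite mulrCA -exprD subnKC // -ltnS.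
have hSB : eqm N (tr N (bint tau S)) SB.
  apply/ZP => n hn; rewrite coefB tr_coef hn /SB /Sm /Sp /tr poly_def rmorph_sum /=.
  rewrite mulr_sumr coef_sum /bint.
  rewrite (big_ord_widen _ (fun k => 'C(n, k)%:R * tau ^+ (n - k) * S k) hn) big_mkcond /=.
  rewrite -sumrB big1 // => k _.
  rewrite comp_polyZ comp_Xn -scalerAr coefZ /m exprMn mulrCA -exprS coefXnM ltnS.
  case: leqP => hk; last by rewrite mulr0 subrr.
  by rewrite powP ?subnK // ?(leq_ltn_trans (leq_subr _ _) hn) // mulrC subrr.
have := ZD (EqS_eqm (t + tau) beta hSB) ZSB.
by rewrite subrK.
Qed.

End T.

Section Final.

Lemma hankel_ext (K : fieldType) (f g : nat -> K) n :
  (forall k, f k = g k) -> hankel f n = hankel g n.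
Proof. by move=> h; rewrite /hankel; congr (\det _); apply/matrixP => i j; rewrite !mxE h. Qed.

Lemma subKr' (K : fieldType) (x y : {poly K}) : x - (x - y) = y.
Proof. by ring. Qed.

Lemma key2 (K : fieldType) (alpha beta r s : K) (u : nat -> K) :
  is_Rev (sshift 1 (Gcf alpha beta r s)) u ->
  u 1%N = 1 /\ forall N, Z N (EqS (r - s) beta (tr N (fun k => sinv (fun j => u j.+1) k.+2))).
Proof.
move=> hu; have [b0 hS] := key hu; split => // N.
have hle : (N <= N.+3)%N by rewrite -addn3 leq_addr.
have := ZB (hS N) (EqS_eqm (r - s) beta (tr_le (fun k => sinv (fun j => u j.+1) k.+2) hle)).
by rewrite subKr'.
Qed.

Lemma hankel_step (K : fieldType) (u : nat -> K) m : u 1%N = 1 ->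
  hankel (fun k => u k.+1) m.+1 =
  (-1) ^+ m.+1 * hankel (fun k => sinv (fun j => u j.+1) k.+2) m.
Proof.
move=> b0; apply: hankel_shift => // k.
have h0 : (fun j => u j.+1) 0%N != 0 by rewrite /= b0 oner_neq0.
by have := @sinv_mul K (fun j => u j.+1) h0 k; rewrite /smul /sone.
Qed.

End Final.

Unset Implicit Arguments.
Set Strict Implicit.

Theorem mainTheorem4 (K : fieldType) (alpha beta r s r' s' : K) (u u' : nat -> K) :
  is_Rev (sshift 1 (Gcf alpha beta r s)) u ->
  is_Rev (sshift 1 (Gcf alpha beta r' s')) u' ->
  forall n : nat, hankel (fun k => u k.+1) n = hankel (fun k => u' k.+1) n.
Proof.
move=> hu hu' n.
have [b0 hS] := key2 hu; have [b0' hS'] := key2 hu'.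
have hbt := EqS_bint ((r' - s') - (r - s)) hS.
have e : (r - s) + ((r' - s') - (r - s)) = r' - s' by ring.
rewrite e in hbt.
have heq := EqS_uniq hS' hbt.
case: n => [|m].
  by rewrite /hankel !det_mx11 !mxE /= b0 b0'.
rewrite !hankel_step //; congr (_ * _).
by rewrite (hankel_ext _ heq) hankel_binom.
Qed.
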